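(* If $G$ is any blowup of the Petersen graph, then $\chi(G)\le\lceil\frac54\omega(G)\rceil$.
   Context: A blowup of a graph $H$ is any graph whose vertex set can be partitioned into $|V(H)|$ (not necessarily non-empty) cliques $Q_v$, $v\in V(H)$, such that $Q_u$ is complete to $Q_v$ if $uv\in E(H)$ and there are no edges between $Q_u$ and $Q_v$ if $uv\notin E(H)$. *)

(* Defs.v *)
From mathcomp Require Import all_boot.
Set Implicit Arguments. Unset Strict Implicit. Unset Printing Implicit Defensive.

(* A (simple) graph on a finite vertex type T is given by a relation e : rel T;
   we only ever look at e x y for x != y (loops are ignored). *)

Definition colorable (T : finType) (e : rel T) (k : nat) : bool :=
  [exists c : {ffun T -> 'I_k},
     [forall x, forall y, ((x != y) && e x y) ==> (c x != c y)]].

Lemma colorable_exists (T : finType) (e : rel T) : exists k, colorable e k.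
Proof.
exists #|T|; apply/existsP; exists [ffun x => enum_rank x].
apply/forallP => x; apply/forallP => y; apply/implyP => /andP [nxy _].
by rewrite !ffunE; apply: contra nxy => /eqP /enum_rank_inj ->.
Qed.

Definition chromatic_number (T : finType) (e : rel T) : nat :=
  ex_minn (colorable_exists e).

Definition is_clique (T : finType) (e : rel T) (A : {set T}) : bool :=
  [forall x in A, forall y in A, (x != y) ==> e x y].

Definition clique_number (T : finType) (e : rel T) : nat :=
  \max_(A : {set T} | is_clique e A) #|A|.

(* Petersen graph: vertices are the 2-element subsets of {0,..,4},
   two vertices adjacent iff the subsets are disjoint (Kneser graph K(5,2)). *)
Definition petersen_vertex (A : {set 'I_5}) : bool := #|A| == 2.
Definition petersen_adj (A B : {set 'I_5}) : bool := [disjoint A & B].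

(* G (on T, with edge relation e) is a blowup of the Petersen graph:
   there is a map f sending each vertex of G to a Petersen vertex; the fibres
   Q_v = f^-1(v) (possibly empty) are cliques, Q_u is complete to Q_v when
   uv is a Petersen edge, and anticomplete to Q_v otherwise. *)
Definition petersen_blowup (T : finType) (e : rel T) : Prop :=
  exists f : T -> {set 'I_5},
    (forall x, petersen_vertex (f x)) /\
    (forall x y, x != y -> e x y = (f x == f y) || petersen_adj (f x) (f y)).

(* Main.v *)
Require Import Defs.
From mathcomp Require Import all_boot zify.
Set Implicit Arguments. Unset Strict Implicit. Unset Printing Implicit Defensive.

Definition goodP (P : {set 'I_5} -> bool) :=
  forall u v : {set 'I_5}, #|u| = 2 -> #|v| = 2 -> P u -> P v -> ~~ [disjoint u & v].
Definition dflt : {set 'I_5} -> bool := fun _ => false.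
Definition allgood (L : seq ({set 'I_5} -> bool)) := forall i, goodP (nth dflt L i).

Lemma allgood_cat L1 L2 : allgood L1 -> allgood L2 -> allgood (L1 ++ L2).
Proof. by move=> h1 h2 i; rewrite nth_cat; case: ifP => _; [apply: h1 | apply: h2]. Qed.

Lemma allgood_nseq n P : goodP P -> allgood (nseq n P).
Proof. by move=> hP i; rewrite nth_nseq; case: ifP => // _ u v _ _. Qed.

Definition star (r : 'I_5) : {set 'I_5} -> bool := fun v => r \in v.
Definition tri (k l m : 'I_5) : {set 'I_5} -> bool := fun v => v \subset [set k; l; m].

Lemma good_star r : goodP (star r).
Proof.
move=> u v _ _ hu hv; apply/negP => /disjoint_setI0/setP/(_ r).
by rewrite !inE; move: hu hv; rewrite /star => -> ->.
Qed.

Lemma good_tri k l m : goodP (tri k l m).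
Proof.
move=> u v hu hv su sv; apply/negP => /disjoint_setI0 huv.
have h4 : #|u :|: v| = 4 by have := cardsUI u v; rewrite huv cards0 addn0 hu hv.
have : #|u :|: v| <= #|[set k; l; m]| by apply: subset_leq_card; by rewrite subUset; apply/andP; split.
rewrite h4 => h; have : #|[set k; l; m]| <= 3.
  rewrite cardsU cards2 cards1; case: (k != l) => /=; lia.
by move=> h3; have := leq_trans h h3.
Qed.

Lemma disj2 (a b c d : 'I_5) : a != c -> a != d -> b != c -> b != d ->
  [disjoint [set a; b] & [set c; d]].
Proof.
move=> ac ad bc bd; apply/pred0P => z /=; rewrite !inE.
apply/negP => /andP [/orP [] /eqP -> /orP [] /eqP h]; subst.
- by rewrite eqxx in ac.
- by rewrite eqxx in ad.
- by rewrite eqxx in bc.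
- by rewrite eqxx in bd.
Qed.

Lemma clique_pair (T : finType) (e : rel T) (f : T -> {set 'I_5})
  (f2 : forall x, #|f x| = 2)
  (hfe : forall x y, x != y -> e x y = (f x == f y) || [disjoint f x & f y])
  (u v : {set 'I_5}) : [disjoint u & v] ->
  #|[set x | f x == u]| + #|[set x | f x == v]| <= clique_number e.
Proof.
move=> duv; set A := [set x | f x == u]; set B := [set x | f x == v].
have AB0 : A :&: B = set0.
  apply/setP => x; rewrite !inE; apply/negP => /andP [/eqP hu /eqP hv].
  move: duv; rewrite -hu -hv => /disjoint_setI0; rewrite setIid => h.
  by have := f2 x; rewrite h cards0.
have -> : #|A| + #|B| = #|A :|: B| by rewrite -cardsUI AB0 cards0 addn0.
rewrite /clique_number; apply: (leq_bigmax_cond (F := fun S : {set T} => #|S|)).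
apply/forallP => x; apply/implyP => hx; apply/forallP => y; apply/implyP => hy.
apply/implyP => nxy; rewrite hfe //.
move: hx hy; rewrite !inE => /orP [] /eqP hx /orP [] /eqP hy; rewrite hx hy ?eqxx //.
- by rewrite duv orbT.
- by rewrite disjoint_sym duv orbT.
Qed.

Lemma color_ok (T : finType) (e : rel T) (f : T -> {set 'I_5})
  (L : seq ({set 'I_5} -> bool))
  (f2 : forall x, #|f x| = 2)
  (hf : forall x y, x != y -> e x y -> (f x == f y) || [disjoint f x & f y])
  (hL : allgood L)
  (hcov : forall x, #|[set y | f y == f x]| <= count (fun P => P (f x)) L) :
  colorable e (size L).
Proof.
pose pos v := [seq i <- iota 0 (size L) | nth dflt L i v].
have size_pos v : size (pos v) = count (fun P => P v) L.
  by rewrite size_filter -[in RHS](mkseq_nth dflt L) /mkseq count_map.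
pose rk x := index x (enum [set y | f y == f x]).
have rk_lt x : rk x < size (pos (f x)).
  rewrite size_pos; apply: leq_trans (hcov x).
  by rewrite cardE /rk index_mem mem_enum inE eqxx.
pose col x := nth 0 (pos (f x)) (rk x).
have col_in x : col x \in pos (f x) by apply: mem_nth.
have col_lt x : col x < size L.
  by have := col_in x; rewrite mem_filter mem_iota add0n => /andP [_ /andP [_ ->]].
have col_P x : nth dflt L (col x) (f x).
  by have := col_in x; rewrite mem_filter => /andP [].
apply/existsP; exists [ffun x => Ordinal (col_lt x)].
apply/forallP => x; apply/forallP => y; apply/implyP => /andP [nxy exy].
rewrite !ffunE; apply/negP => /eqP /(congr1 val) /= hc.
case/orP: (hf x y nxy exy) => [/eqP hfx | hdis].
- have uq : uniq (pos (f x)) by apply: filter_uniq; apply: iota_uniq.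
  have ry := rk_lt y; rewrite -hfx in ry.
  have hr : rk x = rk y.
    apply/eqP; rewrite -(nth_uniq 0 (rk_lt x) ry uq).
    by move: hc; rewrite /col -hfx => ->.
  have hxA : x \in enum [set z | f z == f x] by rewrite mem_enum inE.
  have hyA : y \in enum [set z | f z == f x] by rewrite mem_enum inE hfx.
  move: hr; rewrite /rk -hfx => hr.
  have : nth x (enum [set z | f z == f x]) (index x (enum [set z | f z == f x])) =
         nth x (enum [set z | f z == f x]) (index y (enum [set z | f z == f x])) by rewrite hr.
  by rewrite !nth_index // => hxy; rewrite hxy eqxx in nxy.
- have := hL (col y) (f x) (f y) (f2 x) (f2 y).
  by rewrite -{1}hc col_P col_P hdis => /(_ isT isT).
Qed.

Lemma chrom_le (T : finType) (e : rel T) k : colorable e k -> chromatic_number e <= k.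
Proof. by rewrite /chromatic_number; case: ex_minnP => m _ h /h. Qed.
Lemma arith (M gk gl gm tk tl tm g s y : nat) : gk+gl <= M -> gk+gm <= M -> gl+gm <= M -> tk+gk <= M -> tl+gl <= M -> tm+gm <= M ->
 g = minn gk (minn gl gm) -> s = (g+1)%/2 ->
 y = maxn (tk - ((gl - s) + (gm - s))) (maxn (tl - ((gk-s)+(gm-s))) (tm - ((gk-s)+(gl-s)))) ->
 s + s + (gk - s) + (gl - s) + (gm - s) + y <= (5*M+3)%/4.
Proof. move=> *. lia. Qed.

Lemma sum_max3 (a b c d e f M : nat) : a+d<=M -> a+e<=M -> a+f<=M -> b+d<=M -> b+e<=M -> b+f<=M -> c+d<=M -> c+e<=M -> c+f<=M -> maxn a (maxn b c) + maxn d (maxn e f) <= M.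
Proof. move=> *; lia. Qed.
Lemma t_max3 (t a b c M : nat) : t + a <= M -> t + b <= M -> t + c <= M -> t + maxn a (maxn b c) <= M.
Proof. move=> *; lia. Qed.
Lemma max3_ub a b c : b <= maxn a (maxn b c) /\ c <= maxn a (maxn b c) /\ a <= maxn a (maxn b c).
Proof. lia. Qed.
Lemma min3_lb a b c : minn a (minn b c) <= a /\ minn a (minn b c) <= b /\ minn a (minn b c) <= c.
Proof. lia. Qed.
Lemma le_max_sub1 t a B C : t <= a + maxn (t - a) (maxn B C).
Proof. lia. Qed.
Lemma le_max_sub2 t a A C : t <= a + maxn A (maxn (t - a) C).
Proof. lia. Qed.
Lemma le_max_sub3 t a A B : t <= a + maxn A (maxn B (t - a)).
Proof. lia. Qed.
Lemma le_min3 x a b c : x <= a -> x <= b -> x <= c -> x <= minn a (minn b c).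
Proof. lia. Qed.
Lemma half_facts g : (g+1)%/2 <= g /\ g <= 2 * ((g+1)%/2).
Proof. lia. Qed.

Lemma pairC (a b : 'I_5) : [set a; b] = [set b; a].
Proof. exact: setUC. Qed.

Lemma partC (w : {set 'I_5} -> nat) (M : nat) (p q k l m : 'I_5)
 (hall : forall i : 'I_5, [|| i == p, i == q, i == k, i == l | i == m])
 (pq : p != q) (pk : p != k) (pl : p != l) (pm : p != m) (qk : q != k)
 (ql : q != l) (qm : q != m) (kl : k != l) (km : k != m) (lm : l != m)
 (e1 : w [set l; m] + w [set p; k] <= M) (e2 : w [set l; m] + w [set q; k] <= M)
 (e3 : w [set l; m] + w [set p; q] <= M)
 (e4 : w [set k; m] + w [set p; l] <= M) (e5 : w [set k; m] + w [set q; l] <= M)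
 (e6 : w [set k; m] + w [set p; q] <= M)
 (e7 : w [set k; l] + w [set p; m] <= M) (e8 : w [set k; l] + w [set q; m] <= M)
 (e9 : w [set k; l] + w [set p; q] <= M)
 (c1 : w [set p; k] + w [set q; l] <= M) (c2 : w [set q; k] + w [set p; l] <= M)
 (c3 : w [set p; k] + w [set q; m] <= M) (c4 : w [set q; k] + w [set p; m] <= M)
 (c5 : w [set p; l] + w [set q; m] <= M) (c6 : w [set q; l] + w [set p; m] <= M)
 (h1 : 2 * w [set p; q] <= M)
 (h2 : w [set p; q] + w [set p; k] <= M) (h3 : w [set p; q] + w [set p; l] <= M)
 (h4 : w [set p; q] + w [set p; m] <= M) (h5 : w [set p; q] + w [set q; k] <= M)
 (h6 : w [set p; q] + w [set q; l] <= M) (h7 : w [set p; q] + w [set q; m] <= M)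
 (h8 : w [set p; k] + w [set p; l] <= M) (h9 : w [set p; k] + w [set p; m] <= M)
 (h10 : w [set p; l] + w [set p; m] <= M) (h11 : w [set q; k] + w [set q; l] <= M)
 (h12 : w [set q; k] + w [set q; m] <= M) (h13 : w [set q; l] + w [set q; m] <= M) :
 exists L, size L <= (5 * M + 3) %/ 4 /\ allgood L /\
   forall i j : 'I_5, i != j -> w [set i; j] <= count (fun P => P [set i; j]) L.
Proof.
pose gk := maxn (w [set p; q]) (maxn (w [set p; k]) (w [set q; k])).
pose gl := maxn (w [set p; q]) (maxn (w [set p; l]) (w [set q; l])).
pose gm := maxn (w [set p; q]) (maxn (w [set p; m]) (w [set q; m])).
have Skl : gk + gl <= M.
  apply: sum_max3; [rewrite addnn -mul2n // | exact: h3 | exact: h6 | rewrite addnC; exact: h2 | exact: h8 | exact: c1 | rewrite addnC; exact: h5 | exact: c2 | exact: h11].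
have Skm : gk + gm <= M.
  apply: sum_max3; [rewrite addnn -mul2n // | exact: h4 | exact: h7 | rewrite addnC; exact: h2 | exact: h9 | exact: c3 | rewrite addnC; exact: h5 | exact: c4 | exact: h12].
have Slm : gl + gm <= M.
  apply: sum_max3; [rewrite addnn -mul2n // | exact: h4 | exact: h7 | rewrite addnC; exact: h3 | exact: h10 | exact: c5 | rewrite addnC; exact: h6 | exact: c6 | exact: h13].
have Tk : w [set l; m] + gk <= M by apply: t_max3.
have Tl : w [set k; m] + gl <= M by apply: t_max3.
have Tm : w [set k; l] + gm <= M by apply: t_max3.
have ak : w [set p; k] <= gk /\ w [set q; k] <= gk /\ w [set p; q] <= gk := max3_ub _ _ _.
have al : w [set p; l] <= gl /\ w [set q; l] <= gl /\ w [set p; q] <= gl := max3_ub _ _ _.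
have am : w [set p; m] <= gm /\ w [set q; m] <= gm /\ w [set p; q] <= gm := max3_ub _ _ _.
clearbody gk gl gm.
clear e1 e2 e3 e4 e5 e6 e7 e8 e9 c1 c2 c3 c4 c5 c6 h1 h2 h3 h4 h5 h6 h7 h8 h9 h10 h11 h12 h13.
pose g := minn gk (minn gl gm).
have [gk1 [gl1 gm1]] : g <= gk /\ g <= gl /\ g <= gm := min3_lb gk gl gm.
have wg : w [set p; q] <= g by apply: le_min3; [case: ak => _ [] | case: al => _ [] | case: am => _ []].
pose s := (g + 1) %/ 2.
have [Hsg Hg] : s <= g /\ g <= 2 * s := half_facts g.
pose xk := gk - s. pose xl := gl - s. pose xm := gm - s.
pose y := maxn (w [set l; m] - (xl + xm)) (maxn (w [set k; m] - (xk + xm)) (w [set k; l] - (xk + xl))).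
have Hsz : s + s + xk + xl + xm + y <= (5 * M + 3) %/ 4.
  exact: (arith Skl Skm Slm Tk Tl Tm erefl erefl erefl).
have flm : w [set l; m] <= xl + xm + y := le_max_sub1 _ _ _ _.
have fkm : w [set k; m] <= xk + xm + y := le_max_sub2 _ _ _ _.
have fkl : w [set k; l] <= xk + xl + y := le_max_sub3 _ _ _ _.
have exk : s + xk = gk by rewrite /xk subnKC // (leq_trans Hsg).
have exl : s + xl = gl by rewrite /xl subnKC // (leq_trans Hsg).
have exm : s + xm = gm by rewrite /xm subnKC // (leq_trans Hsg).
clearbody xk xl xm y.
clearbody g s.
exists (nseq s (star p) ++ nseq s (star q) ++ nseq xk (star k) ++
  nseq xl (star l) ++ nseq xm (star m) ++ nseq y (tri k l m)).
split; [|split].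
- by rewrite !size_cat !size_nseq !addnA.
- apply: allgood_cat; first by apply: allgood_nseq; apply: good_star.
  apply: allgood_cat; first by apply: allgood_nseq; apply: good_star.
  apply: allgood_cat; first by apply: allgood_nseq; apply: good_star.
  apply: allgood_cat; first by apply: allgood_nseq; apply: good_star.
  apply: allgood_cat; first by apply: allgood_nseq; apply: good_star.
  by apply: allgood_nseq; apply: good_tri.
case: ak => [ak1 [ak2 ak3]]; case: al => [al1 [al2 al3]]; case: am => [am1 [am2 am3]].
have fpq : w [set p; q] <= s + s by rewrite addnn -mul2n; exact: leq_trans wg Hg.
have fpk : w [set p; k] <= s + xk by rewrite exk.
have fqk : w [set q; k] <= s + xk by rewrite exk.
have fpl : w [set p; l] <= s + xl by rewrite exl.
have fql : w [set q; l] <= s + xl by rewrite exl.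
have fpm : w [set p; m] <= s + xm by rewrite exm.
have fqm : w [set q; m] <= s + xm by rewrite exm.
move: flm fkm fkl; rewrite -!addnA => flm fkm fkl.
have fqp := fpq; rewrite pairC in fqp.
have fkp := fpk; rewrite pairC in fkp.
have fkq := fqk; rewrite pairC in fkq.
have flp := fpl; rewrite pairC in flp.
have flq := fql; rewrite pairC in flq.
have fmp := fpm; rewrite pairC in fmp.
have fmq := fqm; rewrite pairC in fmq.
have fml := flm; rewrite pairC in fml.
have fmk := fkm; rewrite pairC in fmk.
have flk := fkl; rewrite pairC in flk.
clear ak1 ak2 ak3 al1 al2 al3 am1 am2 am3 exk exl exm gk1 gl1 gm1 Hsg Hg Hsz Skl Skm Slm Tk Tl Tm.
have H5 : forall i : 'I_5, i = p \/ i = q \/ i = k \/ i = l \/ i = m.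
  by move=> i; case/orP: (hall i) => [/eqP->|/orP [/eqP->|/orP [/eqP->|/orP [/eqP->|/eqP->]]]]; tauto.
move=> i j; rewrite !count_cat !count_nseq /star /tri /= subUset !sub1set !inE.
case: (H5 i) => [->|[->|[->|[->|->]]]]; case: (H5 j) => [->|[->|[->|[->|->]]]] => nij;
  rewrite ?eqxx // in nij;
  rewrite ?eqxx ?(eq_sym q p) ?(eq_sym k p) ?(eq_sym l p) ?(eq_sym m p) ?(eq_sym k q)
    ?(eq_sym l q) ?(eq_sym m q) ?(eq_sym l k) ?(eq_sym m k) ?(eq_sym m l)
    ?(negbTE pq) ?(negbTE pk) ?(negbTE pl) ?(negbTE pm) ?(negbTE qk) ?(negbTE ql)
    ?(negbTE qm) ?(negbTE kl) ?(negbTE km) ?(negbTE lm) /=;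
  rewrite ?mul1n ?mul0n ?add0n ?addn0; assumption.
Qed.


Definition o0 : 'I_5 := @Ordinal 5 0 isT.
Definition o1 : 'I_5 := @Ordinal 5 1 isT.
Definition o2 : 'I_5 := @Ordinal 5 2 isT.
Definition o3 : 'I_5 := @Ordinal 5 3 isT.
Definition o4 : 'I_5 := @Ordinal 5 4 isT.
Lemma L3 (M a01 a02 a03 a04 a12 a13 a14 a23 a24 a34 : nat) :
 a01 + a23 <= M -> a01 + a24 <= M -> a01 + a34 <= M -> a02 + a13 <= M -> a02 + a14 <= M -> a02 + a34 <= M -> a03 + a12 <= M -> a03 + a14 <= M -> a03 + a24 <= M -> a04 + a12 <= M -> a04 + a13 <= M -> a04 + a23 <= M -> a12 + a34 <= M -> a13 + a24 <= M -> a14 + a23 <= M ->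
 (M < a01 + a02 \/ M < a01 + a03 \/ M < a01 + a04 \/ M < a02 + a03 \/ M < a02 + a04 \/ M < a03 + a04) ->
 (M < a01 + a12 \/ M < a01 + a13 \/ M < a01 + a14 \/ M < a12 + a13 \/ M < a12 + a14 \/ M < a13 + a14) ->
 (M < a02 + a12 \/ M < a02 + a23 \/ M < a02 + a24 \/ M < a12 + a23 \/ M < a12 + a24 \/ M < a23 + a24) ->
 (a03 + a13 <= M /\ a03 + a23 <= M /\ a03 + a34 <= M /\ a13 + a23 <= M /\ a13 + a34 <= M /\ a23 + a34 <= M) /\ (a04 + a14 <= M /\ a04 + a24 <= M /\ a04 + a34 <= M /\ a14 + a24 <= M /\ a14 + a34 <= M /\ a24 + a34 <= M) /\ 2 * a34 <= M.
Proof.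
do 15 intro; intros h0 h1 h2.
destruct h0 as [?|[?|[?|[?|[?|?]]]]]; destruct h1 as [?|[?|[?|[?|[?|?]]]]]; destruct h2 as [?|[?|[?|[?|[?|?]]]]];
 repeat split; lia.
Qed.

Lemma goodpair (M a01 a02 a03 a04 a12 a13 a14 a23 a24 a34 : nat) :
 a01 + a23 <= M -> a01 + a24 <= M -> a01 + a34 <= M -> a02 + a13 <= M -> a02 + a14 <= M -> a02 + a34 <= M -> a03 + a12 <= M -> a03 + a14 <= M -> a03 + a24 <= M -> a04 + a12 <= M -> a04 + a13 <= M -> a04 + a23 <= M -> a12 + a34 <= M -> a13 + a24 <= M -> a14 + a23 <= M ->
 ((a01 + a02 <= M /\ a01 + a03 <= M /\ a01 + a04 <= M /\ a02 + a03 <= M /\ a02 + a04 <= M /\ a03 + a04 <= M) /\ (a01 + a12 <= M /\ a01 + a13 <= M /\ a01 + a14 <= M /\ a12 + a13 <= M /\ a12 + a14 <= M /\ a13 + a14 <= M) /\ 2 * a01 <= M) \/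
 ((a01 + a02 <= M /\ a01 + a03 <= M /\ a01 + a04 <= M /\ a02 + a03 <= M /\ a02 + a04 <= M /\ a03 + a04 <= M) /\ (a02 + a12 <= M /\ a02 + a23 <= M /\ a02 + a24 <= M /\ a12 + a23 <= M /\ a12 + a24 <= M /\ a23 + a24 <= M) /\ 2 * a02 <= M) \/
 ((a01 + a02 <= M /\ a01 + a03 <= M /\ a01 + a04 <= M /\ a02 + a03 <= M /\ a02 + a04 <= M /\ a03 + a04 <= M) /\ (a03 + a13 <= M /\ a03 + a23 <= M /\ a03 + a34 <= M /\ a13 + a23 <= M /\ a13 + a34 <= M /\ a23 + a34 <= M) /\ 2 * a03 <= M) \/
 ((a01 + a02 <= M /\ a01 + a03 <= M /\ a01 + a04 <= M /\ a02 + a03 <= M /\ a02 + a04 <= M /\ a03 + a04 <= M) /\ (a04 + a14 <= M /\ a04 + a24 <= M /\ a04 + a34 <= M /\ a14 + a24 <= M /\ a14 + a34 <= M /\ a24 + a34 <= M) /\ 2 * a04 <= M) \/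
 ((a01 + a12 <= M /\ a01 + a13 <= M /\ a01 + a14 <= M /\ a12 + a13 <= M /\ a12 + a14 <= M /\ a13 + a14 <= M) /\ (a02 + a12 <= M /\ a02 + a23 <= M /\ a02 + a24 <= M /\ a12 + a23 <= M /\ a12 + a24 <= M /\ a23 + a24 <= M) /\ 2 * a12 <= M) \/
 ((a01 + a12 <= M /\ a01 + a13 <= M /\ a01 + a14 <= M /\ a12 + a13 <= M /\ a12 + a14 <= M /\ a13 + a14 <= M) /\ (a03 + a13 <= M /\ a03 + a23 <= M /\ a03 + a34 <= M /\ a13 + a23 <= M /\ a13 + a34 <= M /\ a23 + a34 <= M) /\ 2 * a13 <= M) \/
 ((a01 + a12 <= M /\ a01 + a13 <= M /\ a01 + a14 <= M /\ a12 + a13 <= M /\ a12 + a14 <= M /\ a13 + a14 <= M) /\ (a04 + a14 <= M /\ a04 + a24 <= M /\ a04 + a34 <= M /\ a14 + a24 <= M /\ a14 + a34 <= M /\ a24 + a34 <= M) /\ 2 * a14 <= M) \/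
 ((a02 + a12 <= M /\ a02 + a23 <= M /\ a02 + a24 <= M /\ a12 + a23 <= M /\ a12 + a24 <= M /\ a23 + a24 <= M) /\ (a03 + a13 <= M /\ a03 + a23 <= M /\ a03 + a34 <= M /\ a13 + a23 <= M /\ a13 + a34 <= M /\ a23 + a34 <= M) /\ 2 * a23 <= M) \/
 ((a02 + a12 <= M /\ a02 + a23 <= M /\ a02 + a24 <= M /\ a12 + a23 <= M /\ a12 + a24 <= M /\ a23 + a24 <= M) /\ (a04 + a14 <= M /\ a04 + a24 <= M /\ a04 + a34 <= M /\ a14 + a24 <= M /\ a14 + a34 <= M /\ a24 + a34 <= M) /\ 2 * a24 <= M) \/
 ((a03 + a13 <= M /\ a03 + a23 <= M /\ a03 + a34 <= M /\ a13 + a23 <= M /\ a13 + a34 <= M /\ a23 + a34 <= M) /\ (a04 + a14 <= M /\ a04 + a24 <= M /\ a04 + a34 <= M /\ a14 + a24 <= M /\ a14 + a34 <= M /\ a24 + a34 <= M) /\ 2 * a34 <= M).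
Proof.
do 15 intro.
all: have [LL0|HH0] : (a01 + a02 <= M /\ a01 + a03 <= M /\ a01 + a04 <= M /\ a02 + a03 <= M /\ a02 + a04 <= M /\ a03 + a04 <= M) \/ (M < a01 + a02 \/ M < a01 + a03 \/ M < a01 + a04 \/ M < a02 + a03 \/ M < a02 + a04 \/ M < a03 + a04) by lia.
all: have [LL1|HH1] : (a01 + a12 <= M /\ a01 + a13 <= M /\ a01 + a14 <= M /\ a12 + a13 <= M /\ a12 + a14 <= M /\ a13 + a14 <= M) \/ (M < a01 + a12 \/ M < a01 + a13 \/ M < a01 + a14 \/ M < a12 + a13 \/ M < a12 + a14 \/ M < a13 + a14) by lia.
all: have [LL2|HH2] : (a02 + a12 <= M /\ a02 + a23 <= M /\ a02 + a24 <= M /\ a12 + a23 <= M /\ a12 + a24 <= M /\ a23 + a24 <= M) \/ (M < a02 + a12 \/ M < a02 + a23 \/ M < a02 + a24 \/ M < a12 + a23 \/ M < a12 + a24 \/ M < a23 + a24) by lia.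
all: have [LL3|HH3] : (a03 + a13 <= M /\ a03 + a23 <= M /\ a03 + a34 <= M /\ a13 + a23 <= M /\ a13 + a34 <= M /\ a23 + a34 <= M) \/ (M < a03 + a13 \/ M < a03 + a23 \/ M < a03 + a34 \/ M < a13 + a23 \/ M < a13 + a34 \/ M < a23 + a34) by lia.
all: have [LL4|HH4] : (a04 + a14 <= M /\ a04 + a24 <= M /\ a04 + a34 <= M /\ a14 + a24 <= M /\ a14 + a34 <= M /\ a24 + a34 <= M) \/ (M < a04 + a14 \/ M < a04 + a24 \/ M < a04 + a34 \/ M < a14 + a24 \/ M < a14 + a34 \/ M < a24 + a34) by lia.
- case: (leqP (2 * a01) M) => ?; [left; repeat split; lia | do 1 right; left; repeat split; lia].
- case: (leqP (2 * a01) M) => ?; [left; repeat split; lia | do 1 right; left; repeat split; lia].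
- case: (leqP (2 * a01) M) => ?; [left; repeat split; lia | do 1 right; left; repeat split; lia].
- case: (leqP (2 * a01) M) => ?; [left; repeat split; lia | do 1 right; left; repeat split; lia].
- case: (leqP (2 * a01) M) => ?; [left; repeat split; lia | do 2 right; left; repeat split; lia].
- case: (leqP (2 * a01) M) => ?; [left; repeat split; lia | do 2 right; left; repeat split; lia].
- case: (leqP (2 * a01) M) => ?; [left; repeat split; lia | do 3 right; left; repeat split; lia].
- have [? [? ?]] : _ /\ _ /\ _ := @L3 M a23 a24 a02 a12 a34 a03 a13 a04 a14 a01 ltac:(lia) ltac:(lia) ltac:(lia) ltac:(lia) ltac:(lia) ltac:(lia) ltac:(lia) ltac:(lia) ltac:(lia) ltac:(lia) ltac:(lia) ltac:(lia) ltac:(lia) ltac:(lia) ltac:(lia) ltac:(lia) ltac:(lia) ltac:(lia).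
  left; repeat split; lia.
- case: (leqP (2 * a02) M) => ?; [do 1 right; left; repeat split; lia | do 2 right; left; repeat split; lia].
- case: (leqP (2 * a02) M) => ?; [do 1 right; left; repeat split; lia | do 2 right; left; repeat split; lia].
- case: (leqP (2 * a02) M) => ?; [do 1 right; left; repeat split; lia | do 3 right; left; repeat split; lia].
- have [? [? ?]] : _ /\ _ /\ _ := @L3 M a13 a14 a01 a12 a34 a03 a23 a04 a24 a02 ltac:(lia) ltac:(lia) ltac:(lia) ltac:(lia) ltac:(lia) ltac:(lia) ltac:(lia) ltac:(lia) ltac:(lia) ltac:(lia) ltac:(lia) ltac:(lia) ltac:(lia) ltac:(lia) ltac:(lia) ltac:(lia) ltac:(lia) ltac:(lia).
  do 1 right; left; repeat split; lia.
- case: (leqP (2 * a03) M) => ?; [do 2 right; left; repeat split; lia | do 3 right; left; repeat split; lia].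
- have [? [? ?]] : _ /\ _ /\ _ := @L3 M a12 a14 a01 a13 a24 a02 a23 a04 a34 a03 ltac:(lia) ltac:(lia) ltac:(lia) ltac:(lia) ltac:(lia) ltac:(lia) ltac:(lia) ltac:(lia) ltac:(lia) ltac:(lia) ltac:(lia) ltac:(lia) ltac:(lia) ltac:(lia) ltac:(lia) ltac:(lia) ltac:(lia) ltac:(lia).
  do 2 right; left; repeat split; lia.
- have [? [? ?]] : _ /\ _ /\ _ := @L3 M a12 a13 a01 a14 a23 a02 a24 a03 a34 a04 ltac:(lia) ltac:(lia) ltac:(lia) ltac:(lia) ltac:(lia) ltac:(lia) ltac:(lia) ltac:(lia) ltac:(lia) ltac:(lia) ltac:(lia) ltac:(lia) ltac:(lia) ltac:(lia) ltac:(lia) ltac:(lia) ltac:(lia) ltac:(lia).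
  do 3 right; left; repeat split; lia.
- have [? [? ?]] : _ /\ _ /\ _ := @L3 M a12 a13 a01 a14 a23 a02 a24 a03 a34 a04 ltac:(lia) ltac:(lia) ltac:(lia) ltac:(lia) ltac:(lia) ltac:(lia) ltac:(lia) ltac:(lia) ltac:(lia) ltac:(lia) ltac:(lia) ltac:(lia) ltac:(lia) ltac:(lia) ltac:(lia) ltac:(lia) ltac:(lia) ltac:(lia).
  do 3 right; left; repeat split; lia.
- case: (leqP (2 * a12) M) => ?; [do 4 right; left; repeat split; lia | do 5 right; left; repeat split; lia].
- case: (leqP (2 * a12) M) => ?; [do 4 right; left; repeat split; lia | do 5 right; left; repeat split; lia].
- case: (leqP (2 * a12) M) => ?; [do 4 right; left; repeat split; lia | do 6 right; left; repeat split; lia].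
- have [? [? ?]] : _ /\ _ /\ _ := @L3 M a03 a04 a01 a02 a34 a13 a23 a14 a24 a12 ltac:(lia) ltac:(lia) ltac:(lia) ltac:(lia) ltac:(lia) ltac:(lia) ltac:(lia) ltac:(lia) ltac:(lia) ltac:(lia) ltac:(lia) ltac:(lia) ltac:(lia) ltac:(lia) ltac:(lia) ltac:(lia) ltac:(lia) ltac:(lia).
  do 4 right; left; repeat split; lia.
- case: (leqP (2 * a13) M) => ?; [do 5 right; left; repeat split; lia | do 6 right; left; repeat split; lia].
- have [? [? ?]] : _ /\ _ /\ _ := @L3 M a02 a04 a01 a03 a24 a12 a23 a14 a34 a13 ltac:(lia) ltac:(lia) ltac:(lia) ltac:(lia) ltac:(lia) ltac:(lia) ltac:(lia) ltac:(lia) ltac:(lia) ltac:(lia) ltac:(lia) ltac:(lia) ltac:(lia) ltac:(lia) ltac:(lia) ltac:(lia) ltac:(lia) ltac:(lia).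
  do 5 right; left; repeat split; lia.
- have [? [? ?]] : _ /\ _ /\ _ := @L3 M a02 a03 a01 a04 a23 a12 a24 a13 a34 a14 ltac:(lia) ltac:(lia) ltac:(lia) ltac:(lia) ltac:(lia) ltac:(lia) ltac:(lia) ltac:(lia) ltac:(lia) ltac:(lia) ltac:(lia) ltac:(lia) ltac:(lia) ltac:(lia) ltac:(lia) ltac:(lia) ltac:(lia) ltac:(lia).
  do 6 right; left; repeat split; lia.
- have [? [? ?]] : _ /\ _ /\ _ := @L3 M a02 a03 a01 a04 a23 a12 a24 a13 a34 a14 ltac:(lia) ltac:(lia) ltac:(lia) ltac:(lia) ltac:(lia) ltac:(lia) ltac:(lia) ltac:(lia) ltac:(lia) ltac:(lia) ltac:(lia) ltac:(lia) ltac:(lia) ltac:(lia) ltac:(lia) ltac:(lia) ltac:(lia) ltac:(lia).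
  do 6 right; left; repeat split; lia.
- case: (leqP (2 * a23) M) => ?; [do 7 right; left; repeat split; lia | do 8 right; left; repeat split; lia].
- have [? [? ?]] : _ /\ _ /\ _ := @L3 M a01 a04 a02 a03 a14 a12 a13 a24 a34 a23 ltac:(lia) ltac:(lia) ltac:(lia) ltac:(lia) ltac:(lia) ltac:(lia) ltac:(lia) ltac:(lia) ltac:(lia) ltac:(lia) ltac:(lia) ltac:(lia) ltac:(lia) ltac:(lia) ltac:(lia) ltac:(lia) ltac:(lia) ltac:(lia).
  do 7 right; left; repeat split; lia.
- have [? [? ?]] : _ /\ _ /\ _ := @L3 M a01 a03 a02 a04 a13 a12 a14 a23 a34 a24 ltac:(lia) ltac:(lia) ltac:(lia) ltac:(lia) ltac:(lia) ltac:(lia) ltac:(lia) ltac:(lia) ltac:(lia) ltac:(lia) ltac:(lia) ltac:(lia) ltac:(lia) ltac:(lia) ltac:(lia) ltac:(lia) ltac:(lia) ltac:(lia).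
  do 8 right; left; repeat split; lia.
- have [? [? ?]] : _ /\ _ /\ _ := @L3 M a01 a03 a02 a04 a13 a12 a14 a23 a34 a24 ltac:(lia) ltac:(lia) ltac:(lia) ltac:(lia) ltac:(lia) ltac:(lia) ltac:(lia) ltac:(lia) ltac:(lia) ltac:(lia) ltac:(lia) ltac:(lia) ltac:(lia) ltac:(lia) ltac:(lia) ltac:(lia) ltac:(lia) ltac:(lia).
  do 8 right; left; repeat split; lia.
- have [? [? ?]] : _ /\ _ /\ _ := @L3 M a01 a02 a03 a04 a12 a13 a14 a23 a24 a34 ltac:(lia) ltac:(lia) ltac:(lia) ltac:(lia) ltac:(lia) ltac:(lia) ltac:(lia) ltac:(lia) ltac:(lia) ltac:(lia) ltac:(lia) ltac:(lia) ltac:(lia) ltac:(lia) ltac:(lia) ltac:(lia) ltac:(lia) ltac:(lia).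
  do 9 right; repeat split; lia.
- have [? [? ?]] : _ /\ _ /\ _ := @L3 M a01 a02 a03 a04 a12 a13 a14 a23 a24 a34 ltac:(lia) ltac:(lia) ltac:(lia) ltac:(lia) ltac:(lia) ltac:(lia) ltac:(lia) ltac:(lia) ltac:(lia) ltac:(lia) ltac:(lia) ltac:(lia) ltac:(lia) ltac:(lia) ltac:(lia) ltac:(lia) ltac:(lia) ltac:(lia).
  do 9 right; repeat split; lia.
- have [? [? ?]] : _ /\ _ /\ _ := @L3 M a01 a02 a03 a04 a12 a13 a14 a23 a24 a34 ltac:(lia) ltac:(lia) ltac:(lia) ltac:(lia) ltac:(lia) ltac:(lia) ltac:(lia) ltac:(lia) ltac:(lia) ltac:(lia) ltac:(lia) ltac:(lia) ltac:(lia) ltac:(lia) ltac:(lia) ltac:(lia) ltac:(lia) ltac:(lia).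
  do 9 right; repeat split; lia.
- have [? [? ?]] : _ /\ _ /\ _ := @L3 M a01 a02 a03 a04 a12 a13 a14 a23 a24 a34 ltac:(lia) ltac:(lia) ltac:(lia) ltac:(lia) ltac:(lia) ltac:(lia) ltac:(lia) ltac:(lia) ltac:(lia) ltac:(lia) ltac:(lia) ltac:(lia) ltac:(lia) ltac:(lia) ltac:(lia) ltac:(lia) ltac:(lia) ltac:(lia).
  do 9 right; repeat split; lia.
Qed.
Theorem theorem5p3 (T : finType) (e : rel T)
    (e_irr : irreflexive e) (e_sym : symmetric e)
    (hG : petersen_blowup e) :
  chromatic_number e <= (5 * clique_number e + 3) %/ 4.
Proof.
case: hG => f [f2b hfe].
have f2 : forall x, #|f x| = 2 by move=> x; apply/eqP; exact: (f2b x).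
have hfe' : forall x y, x != y -> e x y = (f x == f y) || [disjoint f x & f y] by exact: hfe.
pose w (v : {set 'I_5}) := #|[set x | f x == v]|.
have edge : forall a b c d : 'I_5, a != c -> a != d -> b != c -> b != d ->
    w [set a; b] + w [set c; d] <= clique_number e.
  by move=> a b c d ac ad bc bd; apply: clique_pair => //; apply: disj2.
suff [L [hsz [hL hcov]]] : exists L, size L <= (5 * clique_number e + 3) %/ 4 /\ allgood L /\
   forall i j : 'I_5, i != j -> w [set i; j] <= count (fun P => P [set i; j]) L.
  apply: leq_trans hsz; apply: chrom_le; apply: (color_ok f2 _ hL).
    by move=> x y nxy; rewrite hfe'.
  move=> x; have /cards2P [i [j [nij fx]]] : #|f x| == 2 by rewrite f2.
  by rewrite fx; exact: hcov.
move: edge; set M := clique_number e => edge.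
have G := @goodpair M (w [set o0; o1]) (w [set o0; o2]) (w [set o0; o3]) (w [set o0; o4]) (w [set o1; o2]) (w [set o1; o3]) (w [set o1; o4]) (w [set o2; o3]) (w [set o2; o4]) (w [set o3; o4]).
move: {G}(G (edge o0 o1 o2 o3 isT isT isT isT) (edge o0 o1 o2 o4 isT isT isT isT) (edge o0 o1 o3 o4 isT isT isT isT) (edge o0 o2 o1 o3 isT isT isT isT) (edge o0 o2 o1 o4 isT isT isT isT) (edge o0 o2 o3 o4 isT isT isT isT) (edge o0 o3 o1 o2 isT isT isT isT) (edge o0 o3 o1 o4 isT isT isT isT) (edge o0 o3 o2 o4 isT isT isT isT) (edge o0 o4 o1 o2 isT isT isT isT) (edge o0 o4 o1 o3 isT isT isT isT) (edge o0 o4 o2 o3 isT isT isT isT) (edge o1 o2 o3 o4 isT isT isT isT) (edge o1 o3 o2 o4 isT isT isT isT) (edge o1 o4 o2 o3 isT isT isT isT)).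
clearbody w.
case => [G|[G|[G|[G|[G|[G|[G|[G|[G|G]]]]]]]]].
- apply: (partC (p := o0) (q := o1) (k := o2) (l := o3) (m := o4)) => //;
    first [ exact isT | by case => [[|[|[|[|[|n]]]]] Hn] | by apply: edge | (rewrite ?(pairC o1 o0) ?(pairC o2 o0) ?(pairC o3 o0) ?(pairC o4 o0) ?(pairC o2 o1) ?(pairC o3 o1) ?(pairC o4 o1) ?(pairC o3 o2) ?(pairC o4 o2) ?(pairC o4 o3); lia) ].
- apply: (partC (p := o0) (q := o2) (k := o1) (l := o3) (m := o4)) => //;
    first [ exact isT | by case => [[|[|[|[|[|n]]]]] Hn] | by apply: edge | (rewrite ?(pairC o1 o0) ?(pairC o2 o0) ?(pairC o3 o0) ?(pairC o4 o0) ?(pairC o2 o1) ?(pairC o3 o1) ?(pairC o4 o1) ?(pairC o3 o2) ?(pairC o4 o2) ?(pairC o4 o3); lia) ].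
- apply: (partC (p := o0) (q := o3) (k := o1) (l := o2) (m := o4)) => //;
    first [ exact isT | by case => [[|[|[|[|[|n]]]]] Hn] | by apply: edge | (rewrite ?(pairC o1 o0) ?(pairC o2 o0) ?(pairC o3 o0) ?(pairC o4 o0) ?(pairC o2 o1) ?(pairC o3 o1) ?(pairC o4 o1) ?(pairC o3 o2) ?(pairC o4 o2) ?(pairC o4 o3); lia) ].
- apply: (partC (p := o0) (q := o4) (k := o1) (l := o2) (m := o3)) => //;
    first [ exact isT | by case => [[|[|[|[|[|n]]]]] Hn] | by apply: edge | (rewrite ?(pairC o1 o0) ?(pairC o2 o0) ?(pairC o3 o0) ?(pairC o4 o0) ?(pairC o2 o1) ?(pairC o3 o1) ?(pairC o4 o1) ?(pairC o3 o2) ?(pairC o4 o2) ?(pairC o4 o3); lia) ].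
- apply: (partC (p := o1) (q := o2) (k := o0) (l := o3) (m := o4)) => //;
    first [ exact isT | by case => [[|[|[|[|[|n]]]]] Hn] | by apply: edge | (rewrite ?(pairC o1 o0) ?(pairC o2 o0) ?(pairC o3 o0) ?(pairC o4 o0) ?(pairC o2 o1) ?(pairC o3 o1) ?(pairC o4 o1) ?(pairC o3 o2) ?(pairC o4 o2) ?(pairC o4 o3); lia) ].
- apply: (partC (p := o1) (q := o3) (k := o0) (l := o2) (m := o4)) => //;
    first [ exact isT | by case => [[|[|[|[|[|n]]]]] Hn] | by apply: edge | (rewrite ?(pairC o1 o0) ?(pairC o2 o0) ?(pairC o3 o0) ?(pairC o4 o0) ?(pairC o2 o1) ?(pairC o3 o1) ?(pairC o4 o1) ?(pairC o3 o2) ?(pairC o4 o2) ?(pairC o4 o3); lia) ].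
- apply: (partC (p := o1) (q := o4) (k := o0) (l := o2) (m := o3)) => //;
    first [ exact isT | by case => [[|[|[|[|[|n]]]]] Hn] | by apply: edge | (rewrite ?(pairC o1 o0) ?(pairC o2 o0) ?(pairC o3 o0) ?(pairC o4 o0) ?(pairC o2 o1) ?(pairC o3 o1) ?(pairC o4 o1) ?(pairC o3 o2) ?(pairC o4 o2) ?(pairC o4 o3); lia) ].
- apply: (partC (p := o2) (q := o3) (k := o0) (l := o1) (m := o4)) => //;
    first [ exact isT | by case => [[|[|[|[|[|n]]]]] Hn] | by apply: edge | (rewrite ?(pairC o1 o0) ?(pairC o2 o0) ?(pairC o3 o0) ?(pairC o4 o0) ?(pairC o2 o1) ?(pairC o3 o1) ?(pairC o4 o1) ?(pairC o3 o2) ?(pairC o4 o2) ?(pairC o4 o3); lia) ].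
- apply: (partC (p := o2) (q := o4) (k := o0) (l := o1) (m := o3)) => //;
    first [ exact isT | by case => [[|[|[|[|[|n]]]]] Hn] | by apply: edge | (rewrite ?(pairC o1 o0) ?(pairC o2 o0) ?(pairC o3 o0) ?(pairC o4 o0) ?(pairC o2 o1) ?(pairC o3 o1) ?(pairC o4 o1) ?(pairC o3 o2) ?(pairC o4 o2) ?(pairC o4 o3); lia) ].
- apply: (partC (p := o3) (q := o4) (k := o0) (l := o1) (m := o2)) => //;
    first [ exact isT | by case => [[|[|[|[|[|n]]]]] Hn] | by apply: edge | (rewrite ?(pairC o1 o0) ?(pairC o2 o0) ?(pairC o3 o0) ?(pairC o4 o0) ?(pairC o2 o1) ?(pairC o3 o1) ?(pairC o4 o1) ?(pairC o3 o2) ?(pairC o4 o2) ?(pairC o4 o3); lia) ].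
Qed.
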